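(* Let $d>0$, $a\geq 7$ be integers with $\gcd(a,d)=1$ and $a=6m$. Let $\mathfrak{p}_4\subset A=k[x_1,x_2,x_3,x_4]$ be the kernel of $x_1\mapsto t^{a}$, $x_2\mapsto t^{2a+d}$, $x_3\mapsto t^{3a+3d}$, $x_4\mapsto t^{4a+6d}$. Then the Koszul complex on $x_3^2-x_1^2x_4,\ x_2^3-x_1^3x_3,\ x_1^{4m+d}-x_4^{m}$ is a minimal free resolution of $A/\mathfrak{p}_4$, its Betti numbers are $\beta_0=1,\beta_1=3,\beta_2=3,\beta_3=1$, and $A/\mathfrak{p}_4$ is a complete intersection. *)

(* Defs.v *)
From HB Require Import structures.
From mathcomp Require Import all_boot all_order all_algebra.
From mathcomp Require Import mpoly.
Set Implicit Arguments. Unset Strict Implicit. Unset Printing Implicit Defensive.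
Import Order.TTheory GRing.Theory Num.Theory.
Local Open Scope ring_scope.

Notation Apoly k := {mpoly k[4]}.
Definition x1 {k : fieldType} : Apoly k := 'X_(0 : 'I_4).
Definition x2 {k : fieldType} : Apoly k := 'X_(1 : 'I_4).
Definition x3 {k : fieldType} : Apoly k := 'X_(2 : 'I_4).
Definition x4 {k : fieldType} : Apoly k := 'X_(3 : 'I_4).

Definition curve_map (k : fieldType) (w : 'I_4 -> nat) (p : Apoly k) : {poly k} :=
  mmap (fun c : k => c%:P) (fun i => 'X^(w i)) p.

Definition curve_ideal (k : fieldType) (w : 'I_4 -> nat) : Apoly k -> Prop :=
  fun p => curve_map w p = 0.

Definition w4 (a d : nat) : 'I_4 -> nat :=
  fun i => nth 0%N [:: a; (2 * a + d)%N; (3 * a + 3 * d)%N; (4 * a + 6 * d)%N] i.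

Definition gen_ideal (R : comNzRingType) (s : seq R) : R -> Prop :=
  fun p => exists c : 'I_(size s) -> R, p = \sum_(i < size s) c i * s`_i.

Definition same_ideal (R : comNzRingType) (I J : R -> Prop) : Prop :=
  forall p, I p <-> J p.

(* Regular sequence: f_i is a nonzerodivisor on R/(f_1..f_{i-1}), and
   (f_1,...,f_r) is a proper ideal. *)
Definition regular_seq (R : comNzRingType) (s : seq R) : Prop :=
  (forall i : nat, (i < size s)%N -> forall g : R,
      gen_ideal (take i s) (g * s`_i) -> gen_ideal (take i s) g)
  /\ ~ gen_ideal s 1.

Definition complete_intersection (R : comNzRingType) (I : R -> Prop) : Prop :=
  exists s : seq R, regular_seq s /\ same_ideal I (gen_ideal s).

(* A free complex of length 3 over R:  0 -> R^r3 -D3-> R^r2 -D2-> R^r1 -D1-> R^1,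
   (F_0 = R, as appropriate for resolving a cyclic module R/I),
   free modules are row vectors, maps are v |-> v *m D. *)
Record free_complex3 (R : comNzRingType) := FreeComplex3 {
  rk1 : nat; rk2 : nat; rk3 : nat;
  dif1 : 'M[R]_(rk1, 1);
  dif2 : 'M[R]_(rk2, rk1);
  dif3 : 'M[R]_(rk3, rk2) }.

(* F is a free resolution of A/I (with F_0 = A and augmentation A -> A/I):
   it is a complex, exact at F_3, F_2, F_1, and im(D1) = I (so coker D1 = A/I). *)
Definition is_free_resolution (R : comNzRingType) (I : R -> Prop)
    (F : free_complex3 R) : Prop :=
  [/\ (dif3 F *m dif2 F = 0 /\ dif2 F *m dif1 F = 0),
      (forall v : 'rV[R]_(rk3 F), v *m dif3 F = 0 -> v = 0),
      (forall v : 'rV[R]_(rk2 F), v *m dif2 F = 0 ->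
          exists u : 'rV[R]_(rk3 F), v = u *m dif3 F),
      (forall v : 'rV[R]_(rk1 F), v *m dif1 F = 0 ->
          exists u : 'rV[R]_(rk2 F), v = u *m dif2 F)
    & (forall p : R, I p <-> exists v : 'rV[R]_(rk1 F),
          p = (v *m dif1 F) 0 0)].

(* The maximal homogeneous ideal (x_1,...,x_n): zero constant coefficient. *)
Definition in_max_ideal (n : nat) (k : fieldType) (p : {mpoly k[n]}) : bool :=
  p@_0%MM == 0.

Definition min_matrix (n : nat) (k : fieldType) (r c : nat)
    (M : 'M[{mpoly k[n]}]_(r, c)) : Prop :=
  forall i j, in_max_ideal (M i j).

Definition is_minimal_free_resolution (n : nat) (k : fieldType)
    (I : {mpoly k[n]} -> Prop) (F : free_complex3 {mpoly k[n]}) : Prop :=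
  [/\ is_free_resolution I F, min_matrix (dif1 F), min_matrix (dif2 F)
    & min_matrix (dif3 F)].

Definition betti (R : comNzRingType) (F : free_complex3 R) (i : nat) : nat :=
  match i with 0 => 1%N | 1 => rk1 F | 2 => rk2 F | 3 => rk3 F | _ => 0 end.

(* The Koszul complex on f1 f2 f3, bases: K1 = <e1,e2,e3>,
   K2 = <e2/\e3, e1/\e3, e1/\e2>, K3 = <e1/\e2/\e3>, with
   d(e_i) = f_i, d(e_i/\e_j) = f_i e_j - f_j e_i,
   d(e1/\e2/\e3) = f1 e2/\e3 - f2 e1/\e3 + f3 e1/\e2. *)
Definition koszul3 (R : comNzRingType) (f1 f2 f3 : R) : free_complex3 R :=
  @FreeComplex3 R 3 3 1
    (\matrix_(i < 3, j < 1) [:: f1; f2; f3]`_i)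
    (\matrix_(i < 3, j < 3)
        (nth [::] [:: [:: 0; - f3; f2]; [:: - f3; 0; f1]; [:: - f2; f1; 0]] i)`_j)
    (\matrix_(i < 1, j < 3) [:: f1; - f2; f3]`_j).

(* Main.v *)
Require Import Defs.
From HB Require Import structures.
From mathcomp Require Import all_boot all_order all_algebra.
From mathcomp Require Import mpoly.
From mathcomp Require Import zify ring lra.
Import Order.TTheory GRing.Theory Num.Theory.
Local Open Scope ring_scope.
Set Implicit Arguments. Unset Strict Implicit. Unset Printing Implicit Defensive.

Definition mk4 (a b c e : nat) : 'X_{1..4} :=
  [multinom nth 0%N [:: a; b; c; e] i | i < 4].

Lemma mk4E a b c e (i : 'I_4) : mk4 a b c e i = nth 0%N [:: a; b; c; e] i.
Proof. exact: mnmE. Qed.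

Lemma mk4_eta (m : 'X_{1..4}) : m = mk4 (m 0) (m 1) (m 2) (m 3).
Proof. by apply/mnmP => -[[|[|[|[|i]]]] Hi] //; rewrite mk4E //=; congr (m _); apply/val_inj. Qed.

Lemma mk4D a b c e a' b' c' e' :
  (mk4 a b c e + mk4 a' b' c' e')%MM = mk4 (a+a') (b+b') (c+c') (e+e').
Proof. by apply/mnmP => -[[|[|[|[|i]]]] Hi] //; rewrite mnmDE !mk4E. Qed.

Lemma mk4Mn a b c e k :
  (mk4 a b c e *+ k)%MM = mk4 (a*k) (b*k) (c*k) (e*k).
Proof. by apply/mnmP => -[[|[|[|[|i]]]] Hi] //; rewrite mulmnE !mk4E. Qed.

Lemma mk4_inj a b c e a' b' c' e' :
  mk4 a b c e = mk4 a' b' c' e' -> [/\ a = a', b = b', c = c' & e = e'].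
Proof.
move=> H; have H' := fun i => congr1 (fun m : 'X_{1..4} => m i) H.
by move: (H' 0) (H' 1) (H' 2) (H' 3); rewrite !mk4E.
Qed.

Lemma U4E (i : 'I_4) : (U_(i))%MM = mk4 (i == 0 :> nat) (i == 1 :> nat) (i == 2 :> nat) (i == 3 :> nat).
Proof.
apply/mnmP => j; rewrite mnm1E mk4E.
by case: i j => [[|[|[|[|i]]]] Hi] [[|[|[|[|j]]]] Hj].
Qed.

Section Maps.
Variable k : fieldType.

Definition Lm (e : 'I_4 -> 'X_{1..4}) (m : 'X_{1..4}) : 'X_{1..4} :=
  (e 0%R *+ m 0%R + e 1%R *+ m 1%R + e 2%R *+ m 2%R + e 3%R *+ m 3%R)%MM.

Definition mm (e : 'I_4 -> 'X_{1..4}) (p : {mpoly k[4]}) : {mpoly k[4]} :=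
  mmap (@mpolyC 4 k) (fun i => 'X_[e i]) p.

Lemma mm_rmorph e : multiplicative (mm e).
Proof. exact: mmap_is_multiplicative. Qed.

Lemma mmM e p q : mm e (p * q) = mm e p * mm e q.
Proof. by case: (mm_rmorph e) => H _; apply: H. Qed.

Lemma mmB e p q : mm e (p - q) = mm e p - mm e q.
Proof. exact: mmapB. Qed.

Lemma lift1 : lift ord0 ord0 = 1%R :> 'I_4. Proof. exact: val_inj. Qed.
Lemma lift2 : lift ord0 (lift ord0 ord0) = 2%R :> 'I_4. Proof. exact: val_inj. Qed.
Lemma lift3 : lift ord0 (lift ord0 (lift ord0 ord0)) = 3%R :> 'I_4. Proof. exact: val_inj. Qed.

Lemma mmX e m : mm e 'X_[m] = 'X_[Lm e m].
Proof.
rewrite /mm mmapX /mmap1 !big_ord_recl big_ord0 mulr1 /Lm !mpolyXD !mpolyXn.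
by rewrite !mulrA lift1 lift2 lift3.
Qed.

Lemma mmE e p : mm e p = \sum_(m <- msupp p) (p@_m)%:MP * 'X_[Lm e m].
Proof.
rewrite /mm /mmap; apply: eq_bigr => m _; congr (_ * _).
by rewrite -mmX /mm mmapX.
Qed.

Lemma coef_expand (p : {mpoly k[4]}) mo :
  p@_mo = \sum_(m <- msupp p) p@_m * (m == mo)%:R.
Proof.
rewrite {1}(mpolyE p) raddf_sum /=; apply: eq_bigr => m _.
by rewrite mcoeffZ mcoeffX.
Qed.

Lemma mm_inj (P : pred 'X_{1..4}) e r :
  (forall m, ~~ P m -> r@_m = 0) -> {in P &, injective (Lm e)} ->
  mm e r = 0 -> r = 0.
Proof.
move=> nP inj H; apply/mpolyP => mo; rewrite mcoeff0.
case: (boolP (P mo)) => Pmo; last exact: nP.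
have := congr1 (mcoeff (Lm e mo)) H; rewrite mcoeff0 mmE raddf_sum /= => <-.
rewrite coef_expand; apply: eq_big_seq => m Hm.
rewrite mcoeffCM mcoeffX.
have Pm : P m.
  apply/negPn/negP => /nP; move: Hm; rewrite mcoeff_msupp => /eqP; done.
by rewrite (inj_in_eq inj).
Qed.

Lemma cmX (w : 'I_4 -> nat) m :
  curve_map (k := k) w 'X_[m] = 'X^(w 0%R * m 0%R + w 1%R * m 1%R + w 2%R * m 2%R + w 3%R * m 3%R)%N.
Proof.
rewrite /curve_map mmapX /mmap1 !big_ord_recl big_ord0 mulr1 -!exprM !exprD.
by rewrite !mulrA lift1 lift2 lift3.
Qed.

Definition Lw (w : 'I_4 -> nat) (m : 'X_{1..4}) :=
  (w 0%R * m 0%R + w 1%R * m 1%R + w 2%R * m 2%R + w 3%R * m 3%R)%N.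

Lemma cm_rmorph w : multiplicative (curve_map (k := k) w).
Proof. exact: mmap_is_multiplicative. Qed.

Lemma cmM w p q : curve_map (k := k) w (p * q) = curve_map w p * curve_map w q.
Proof. by case: (cm_rmorph w) => H _; apply: H. Qed.

Lemma cmB w p q : curve_map (k := k) w (p - q) = curve_map w p - curve_map w q.
Proof. exact: mmapB. Qed.

Lemma cmD w p q : curve_map (k := k) w (p + q) = curve_map w p + curve_map w q.
Proof. exact: mmapD. Qed.

Lemma cm_inj (P : pred 'X_{1..4}) w (r : {mpoly k[4]}) :
  (forall m, ~~ P m -> r@_m = 0) -> {in P &, injective (Lw w)} ->
  curve_map w r = 0 -> r = 0.
Proof.
move=> nP inj H; apply/mpolyP => mo; rewrite mcoeff0.
case: (boolP (P mo)) => Pmo; last exact: nP.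
have := congr1 (fun q : {poly k} => q`_(Lw w mo)) H.
rewrite coef0 /curve_map /mmap coef_sum /= => <-.
rewrite coef_expand; apply: eq_big_seq => m Hm.
have -> : mmap1 (fun i => 'X^(w i)) m = 'X^(Lw w m) :> {poly k}.
  by rewrite -(cmX w m) /curve_map mmapX.
rewrite coefCM coefXn.
have Pm : P m.
  apply/negPn/negP => /nP; move: Hm; rewrite mcoeff_msupp => /eqP; done.
by rewrite (inj_in_eq inj) // eq_sym.
Qed.

End Maps.

Section Reduce.
Variable k : fieldType.
Variables (j : 'I_4) (q : nat) (mu : 'X_{1..4}).
Hypothesis q_gt0 : (0 < q)%N.
Hypothesis muj : mu j = 0%N.

Definition base (mo : 'X_{1..4}) : 'X_{1..4} :=
  [multinom if i == j then (mo i %% q)%N else mo i | i < 4].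
Definition red (mo : 'X_{1..4}) : 'X_{1..4} :=
  (base mo + mu *+ (mo j %/ q))%MM.

Definition FF : {mpoly k[4]} := 'X_[U_(j) *+ q] - 'X_[mu].

Lemma red_j mo : (red mo j < q)%N.
Proof. by rewrite /red mnmDE mulmnE muj mul0n addn0 mnmE eqxx ltn_mod. Qed.

Lemma red_mem mo : exists c, 'X_[mo] - 'X_[red mo] = c * FF.
Proof.
set t := (mo j %/ q)%N.
have E1 : mo = (base mo + (U_(j) *+ q) *+ t)%MM.
  apply/mnmP => i; rewrite mnmDE !mulmnE mnmE mnm1E.
  case: eqP => [->|/eqP ne]; last by rewrite eq_sym (negbTE ne) !mul0n addn0.
  rewrite /t eqxx mul1n; have := divn_eq (mo j) q; lia.
rewrite {1}E1 /red !mpolyXD -!mpolyXn -mulrBr subrXX.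
by exists ('X_[base mo] * \sum_(i < t) 'X_j ^+ q ^+ (t.-1 - i) * 'X_[mu] ^+ i); rewrite /FF -mpolyXn mulrCA mulrC.
Qed.

Definition inF (x : {mpoly k[4]}) := exists c, x = c * FF.

Lemma reduce (Q : pred 'X_{1..4}) p :
  (forall mo, Q mo -> Q (red mo)) -> (forall mo, ~~ Q mo -> p@_mo = 0) ->
  exists r, (forall mo, ~~ (Q mo && (mo j < q)%N) -> r@_mo = 0) /\
            exists c, p = r + c * FF.
Proof.
move=> Qred nQ.
exists (\sum_(m <- msupp p) p@_m *: 'X_[red m]); split.
  move=> mo Hmo; rewrite raddf_sum /=; apply: big1_seq => m /andP [_ Hm].
  rewrite mcoeffZ mcoeffX; case: eqP => [E|_]; last by rewrite mulr0.
  have Qm : Q m by apply/negPn/negP => /nQ; move: Hm; rewrite mcoeff_msupp => /eqP.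
  by move: Hmo; rewrite -E Qred // red_j.
suff [c Hc] : inF (p - \sum_(m <- msupp p) p@_m *: 'X_[red m]).
  by exists c; rewrite -Hc addrC subrK.
rewrite {1}(mpolyE p) -sumrB.
apply: (big_ind inF).
- by exists 0; rewrite mul0r.
- by move=> x y [cx ->] [cy ->]; exists (cx + cy); rewrite mulrDl.
- move=> m _; have [c Hc] := red_mem m.
  by exists (p@_m *: c); rewrite -scalerBr Hc scalerAl.
Qed.

End Reduce.

Lemma red_other (j : 'I_4) q mu mo (i : 'I_4) : i != j ->
  red j q mu mo i = (mo i + mu i * (mo j %/ q))%N.
Proof. by move=> /negbTE ne; rewrite /red mnmDE mulmnE mnmE ne. Qed.

Lemma Xpow (k : fieldType) (i : 'I_4) n :
  ('X_i : {mpoly k[4]}) ^+ n = 'X_[mk4 ((i == 0 :> nat) * n) ((i == 1 :> nat) * n) ((i == 2 :> nat) * n) ((i == 3 :> nat) * n)].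
Proof. by rewrite mpolyXn U4E mk4Mn. Qed.

Section Fs.
Variables (k : fieldType) (m d : nat).

Definition g1 : {mpoly k[4]} := 'X_[mk4 0 0 2 0] - 'X_[mk4 2 0 0 1].
Definition g2 : {mpoly k[4]} := 'X_[mk4 0 3 0 0] - 'X_[mk4 3 0 1 0].
Definition g3 : {mpoly k[4]} := 'X_[mk4 (4 * m + d) 0 0 0] - 'X_[mk4 0 0 0 m].

Lemma f1E : (x3 ^+ 2 - x1 ^+ 2 * x4 : {mpoly k[4]}) = g1.
Proof.
rewrite /x1 /x3 /x4 /g1 !Xpow -(expr1 ('X_(3%R : 'I_4))) Xpow -mpolyXD mk4D /=.
by rewrite !mul0n !mul1n.
Qed.

Lemma f2E : (x2 ^+ 3 - x1 ^+ 3 * x3 : {mpoly k[4]}) = g2.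
Proof.
rewrite /x1 /x2 /x3 /g2 !Xpow -(expr1 ('X_(2%R : 'I_4))) Xpow -mpolyXD mk4D /=.
by rewrite !mul0n !mul1n.
Qed.

Lemma f3E : (x1 ^+ (4 * m + d) - x4 ^+ m : {mpoly k[4]}) = g3.
Proof. by rewrite /x1 /x4 /g3 !Xpow /= !mul0n !mul1n. Qed.

Lemma FF1 : FF k 2%R 2 (mk4 2 0 0 1) = g1.
Proof. by rewrite /FF U4E mk4Mn. Qed.
Lemma FF2 : FF k 1%R 3 (mk4 3 0 1 0) = g2.
Proof. by rewrite /FF U4E mk4Mn. Qed.
Lemma FF3 : FF k 3%R m (mk4 (4 * m + d) 0 0 0) = - g3.
Proof. by rewrite /FF U4E mk4Mn /= !mul0n mul1n /g3 opprB. Qed.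

Hypothesis m_gt0 : (0 < m)%N.

Lemma red1 (p : {mpoly k[4]}) : exists r c : {mpoly k[4]},
  (forall mo : 'X_{1..4}, ~~ (mo 2%R < 2)%N -> r@_mo = 0) /\ p = r + c * g1.
Proof.
have [|//|r [Hr [c Hc]]] := @reduce k 2%R 2 (mk4 2 0 0 1) isT (ltac:(by rewrite mk4E)) predT p.
  by [].
by exists r, c; split => [mo Hmo|]; [apply: Hr; rewrite /= Hmo | rewrite Hc FF1].
Qed.

Lemma red12 (p : {mpoly k[4]}) : exists r c1 c2 : {mpoly k[4]},
  (forall mo : 'X_{1..4}, ~~ ((mo 1%R < 3) && (mo 2%R < 2))%N -> r@_mo = 0) /\
  p = r + c1 * g1 + c2 * g2.
Proof.
have [|//|r [Hr [c2 Hc]]] := @reduce k 1%R 3 (mk4 3 0 1 0) isT (ltac:(by rewrite mk4E)) predT p.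
  by [].
have [||r' [Hr' [c1 Hc']]] := @reduce k 2%R 2 (mk4 2 0 0 1) isT (ltac:(by rewrite mk4E))
   (fun mo => (mo 1%R < 3)%N) r.
- by move=> mo /= H; rewrite red_other // mk4E /= mul0n addn0.
- by move=> mo H; apply: Hr; rewrite /= H.
exists r', c1, c2; split => //.
by rewrite Hc Hc' -FF1 -FF2 addrAC.
Qed.

Lemma red123 (p : {mpoly k[4]}) : exists r c1 c2 c3 : {mpoly k[4]},
  (forall mo : 'X_{1..4}, ~~ [&& (mo 1%R < 3), (mo 2%R < 2) & (mo 3%R < m)]%N -> r@_mo = 0) /\
  p = r + c1 * g1 + c2 * g2 + c3 * g3.
Proof.
have [r [c1 [c2 [Hr E]]]] := red12 p.
have [||r' [Hr' [c3 Hc']]] := @reduce k 3%R m (mk4 (4 * m + d) 0 0 0) m_gt0 (ltac:(by rewrite mk4E))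
   (fun mo => (mo 1%R < 3)%N && (mo 2%R < 2)%N) r.
- by move=> mo /= H; rewrite !red_other // !mk4E /= !mul0n !addn0.
- by move=> mo H; apply: Hr.
exists r', c1, c2, (- c3); split.
  by move=> mo; rewrite andbA; apply: Hr'.
by rewrite E Hc' FF3 mulrN mulNr; ring.
Qed.

End Fs.

Lemma mk4_ext (m1 m2 : 'X_{1..4}) :
  m1 0%R = m2 0%R -> m1 1%R = m2 1%R -> m1 2%R = m2 2%R -> m1 3%R = m2 3%R -> m1 = m2.
Proof. by move=> h0 h1 h2 h3; rewrite (mk4_eta m1) (mk4_eta m2) h0 h1 h2 h3. Qed.

Section Regular.
Variables (k : fieldType) (m d : nat).
Hypothesis m_gt0 : (0 < m)%N.

Lemma mmD e (p q : {mpoly k[4]}) : mm e (p + q) = mm e p + mm e q.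
Proof. exact: mmapD. Qed.

Lemma Xdiff_neq0 (A B : 'X_{1..4}) : A != B -> 'X_[A] - 'X_[B] != 0 :> {mpoly k[4]}.
Proof.
move=> nAB; apply/eqP => H; have := congr1 (mcoeff A) H.
rewrite mcoeffB !mcoeffX eqxx eq_sym (negbTE nAB) mcoeff0 subr0 => /eqP.
by rewrite oner_eq0.
Qed.

Definition echi (i : 'I_4) : 'X_{1..4} :=
  nth 0%MM [:: mk4 2 0 0 0; mk4 0 1 0 0; mk4 2 0 0 1; mk4 0 0 0 2] i.

Lemma Lm_chi mo : Lm echi mo = mk4 (2 * mo 0%R + 2 * mo 2%R) (mo 1%R) 0 (mo 2%R + 2 * mo 3%R).
Proof. rewrite /Lm /echi /= !mk4Mn !mk4D; congr mk4; lia. Qed.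

Lemma mm_chi_g1 : mm echi (g1 k) = 0.
Proof. by rewrite /g1 mmB !mmX !Lm_chi !mk4E /= subrr. Qed.

Lemma mm_chi_g2 : mm echi (g2 k) != 0.
Proof.
rewrite /g2 mmB !mmX !Lm_chi !mk4E /=; apply: Xdiff_neq0.
by apply/eqP => /mk4_inj [].
Qed.

Lemma reg2 (g c : {mpoly k[4]}) : g * g2 k = c * g1 k -> exists c', g = c' * g1 k.
Proof.
move=> H.
have mg : mm echi g = 0.
  have := congr1 (mm echi) H; rewrite !mmM mm_chi_g1 mulr0 => /eqP.
  by rewrite mulf_eq0 (negbTE mm_chi_g2) orbF => /eqP.
have [r [c0 [Hr E]]] := red1 g.
have r0 : r = 0.
  apply: (mm_inj (P := fun mo => (mo 2%R < 2)%N) (e := echi)) => //.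
    move=> m1 m2 => h1 h2; rewrite !Lm_chi => /mk4_inj [e0 e1 _ e3].
    apply: mk4_ext; lia.
  by move: mg; rewrite E mmD mmM mm_chi_g1 mulr0 addr0.
by exists c0; rewrite E r0 add0r.
Qed.

Definition epsi (i : 'I_4) : 'X_{1..4} :=
  nth 0%MM [:: mk4 6 0 0 0; mk4 8 0 0 1; mk4 6 0 0 3; mk4 0 0 0 6] i.

Lemma Lm_psi mo : Lm epsi mo =
  mk4 (6 * mo 0%R + 8 * mo 1%R + 6 * mo 2%R) 0 0 (mo 1%R + 3 * mo 2%R + 6 * mo 3%R).
Proof. rewrite /Lm /epsi /= !mk4Mn !mk4D; congr mk4; lia. Qed.

Lemma mm_psi_g1 : mm epsi (g1 k) = 0.
Proof. by rewrite /g1 mmB !mmX !Lm_psi !mk4E /= subrr. Qed.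

Lemma mm_psi_g2 : mm epsi (g2 k) = 0.
Proof. by rewrite /g2 mmB !mmX !Lm_psi !mk4E /= subrr. Qed.

Lemma mm_psi_g3 : mm epsi (g3 k m d) != 0.
Proof.
rewrite /g3 mmB !mmX !Lm_psi !mk4E /=; apply: Xdiff_neq0.
apply/eqP => /mk4_inj [_ _ _]; lia.
Qed.

Lemma reg3 (g c1 c2 : {mpoly k[4]}) : g * g3 k m d = c1 * g1 k + c2 * g2 k ->
  exists c1' c2', g = c1' * g1 k + c2' * g2 k.
Proof.
move=> H.
have mg : mm epsi g = 0.
  have := congr1 (mm epsi) H; rewrite mmD !mmM mm_psi_g1 mm_psi_g2 !mulr0 addr0 => /eqP.
  by rewrite mulf_eq0 (negbTE mm_psi_g3) orbF => /eqP.
have [r [c1' [c2' [Hr E]]]] := red12 g.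
have r0 : r = 0.
  apply: (mm_inj (P := fun mo => (mo 1%R < 3)%N && (mo 2%R < 2)%N) (e := epsi)) => //.
    move=> m1 m2 => /andP [h1 h1'] /andP [h2 h2'].
    rewrite !Lm_psi => /mk4_inj [e0 _ _ e3].
    apply: mk4_ext; lia.
  by move: mg; rewrite E !mmD !mmM mm_psi_g1 mm_psi_g2 !mulr0 !addr0.
by exists c1', c2'; rewrite E r0 add0r.
Qed.

End Regular.

Lemma cop_step (a d s s' T T' : nat) : coprime a d -> (s <= s')%N -> (s' < a)%N ->
  (a * T + d * s = a * T' + d * s')%N -> s = s'.
Proof.
move=> co le lt E.
have E2 : (d * (s' - s) = a * (T - T'))%N.
  rewrite mulnBr mulnBr; lia.
have : (a %| d * (s' - s))%N by rewrite E2 dvdn_mulr.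
rewrite Gauss_dvdr //.
case: (posnP (s' - s)) => [|pos /dvdn_leq] ; first lia.
move=> /(_ pos); lia.
Qed.

Section Kernel.
Variables (k : fieldType) (mm d : nat).
Hypothesis mm_gt0 : (0 < mm)%N.
Hypothesis co : coprime (6 * mm) d.
Let a := (6 * mm)%N.

Lemma Lw_w4 mo : Lw (w4 a d) mo =
  (a * mo 0%R + (2 * a + d) * mo 1%R + (3 * a + 3 * d) * mo 2%R + (4 * a + 6 * d) * mo 3%R)%N.
Proof. by []. Qed.

Lemma cmXw mo : curve_map (k := k) (w4 a d) 'X_[mo] = 'X^(Lw (w4 a d) mo).
Proof. exact: cmX. Qed.

Lemma cm_g1 : curve_map (w4 a d) (g1 k) = 0.
Proof. rewrite /g1 cmB !cmXw !Lw_w4 !mk4E /=; apply/eqP; rewrite subr_eq0; apply/eqP; congr 'X^_; lia. Qed.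

Lemma cm_g2 : curve_map (w4 a d) (g2 k) = 0.
Proof. rewrite /g2 cmB !cmXw !Lw_w4 !mk4E /=; apply/eqP; rewrite subr_eq0; apply/eqP; congr 'X^_; lia. Qed.

Lemma cm_g3 : curve_map (w4 a d) (g3 k mm d) = 0.
Proof. rewrite /g3 cmB !cmXw !Lw_w4 !mk4E /=; apply/eqP; rewrite subr_eq0; apply/eqP; congr 'X^_; rewrite /a; nia. Qed.

Lemma Lw_inj : {in (fun mo : 'X_{1..4} => [&& (mo 1%R < 3), (mo 2%R < 2) & (mo 3%R < mm)]%N) &,
   injective (Lw (w4 a d))}.
Proof.
move=> m1 m2 /and3P [h1 h2 h3] /and3P [h1' h2' h3']; rewrite !Lw_w4 => E.
set s1 := (m1 1%R + 3 * m1 2%R + 6 * m1 3%R)%N.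
set s2 := (m2 1%R + 3 * m2 2%R + 6 * m2 3%R)%N.
set T1 := (m1 0%R + 2 * m1 1%R + 3 * m1 2%R + 4 * m1 3%R)%N.
set T2 := (m2 0%R + 2 * m2 1%R + 3 * m2 2%R + 4 * m2 3%R)%N.
have E' : (a * T1 + d * s1 = a * T2 + d * s2)%N by rewrite /T1 /T2 /s1 /s2; nia.
have ha1 : (s1 < a)%N by rewrite /s1 /a; lia.
have ha2 : (s2 < a)%N by rewrite /s2 /a; lia.
have es : s1 = s2.
  case: (leqP s1 s2) => h; first exact: (cop_step co h ha2 E').
  by apply/esym; apply: (cop_step co (ltnW h) ha1); exact: esym E'.
have e1 : m1 1%R = m2 1%R by move: es; rewrite /s1 /s2; lia.
have e2 : m1 2%R = m2 2%R by move: es; rewrite /s1 /s2; lia.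
have e3 : m1 3%R = m2 3%R by move: es; rewrite /s1 /s2; lia.
apply: mk4_ext => //.
move: E; rewrite e1 e2 e3 => /addIn /addIn /addIn /eqP.
by rewrite eqn_pmul2l ?muln_gt0 // => /eqP.
Qed.

Lemma kernel (p : {mpoly k[4]}) : curve_map (w4 a d) p = 0 <->
  exists c1 c2 c3, p = c1 * g1 k + c2 * g2 k + c3 * g3 k mm d.
Proof.
split; last first.
  by move=> [c1 [c2 [c3 ->]]]; rewrite !cmD !cmM cm_g1 cm_g2 cm_g3 !mulr0 !addr0.
move=> H.
have [r [c1 [c2 [c3 [Hr E]]]]] := @red123 k mm d mm_gt0 p.
have r0 : r = 0.
  apply: (cm_inj Hr Lw_inj).
  by move: H; rewrite E !cmD !cmM cm_g1 cm_g2 cm_g3 !mulr0 !addr0.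
by exists c1, c2, c3; rewrite E r0 add0r.
Qed.

End Kernel.

Lemma l31 : lift ord0 ord0 = 1%R :> 'I_3. Proof. exact: val_inj. Qed.
Lemma l32 : lift ord0 (lift ord0 ord0) = 2%R :> 'I_3. Proof. exact: val_inj. Qed.
Lemma l30 : ord0 = 0%R :> 'I_3. Proof. exact: val_inj. Qed.
Lemma l10 : ord0 = 0%R :> 'I_1. Proof. exact: val_inj. Qed.

Section Final.
Variable R : comNzRingType.

Lemma gen0 (p : R) : gen_ideal [::] p <-> p = 0.
Proof.
split => [[c ->]|->]; first by rewrite big_ord0.
by exists (fun _ => 0); rewrite big_ord0.
Qed.

Lemma gen1 (a p : R) : gen_ideal [:: a] p <-> exists c, p = c * a.
Proof.
split => [[c ->]|[c ->]].
  by exists (c ord0); rewrite big_ord_recl big_ord0 addr0.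
by exists (fun _ => c); rewrite big_ord_recl big_ord0 addr0.
Qed.

Lemma gen2 (a b p : R) : gen_ideal [:: a; b] p <-> exists c1 c2, p = c1 * a + c2 * b.
Proof.
split => [[c ->]|[c1 [c2 ->]]].
  by exists (c ord0), (c (lift ord0 ord0)); rewrite !big_ord_recl big_ord0 addr0.
exists (fun i : 'I_2 => nth 0 [:: c1; c2] i).
by rewrite !big_ord_recl big_ord0 addr0.
Qed.

Lemma gen3 (a b e p : R) : gen_ideal [:: a; b; e] p <->
  exists c1 c2 c3, p = c1 * a + c2 * b + c3 * e.
Proof.
split => [[c ->]|[c1 [c2 [c3 ->]]]].
  exists (c ord0), (c (lift ord0 ord0)), (c (lift ord0 (lift ord0 ord0))).
  by rewrite !big_ord_recl big_ord0 addr0 addrA.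
exists (fun i : 'I_3 => nth 0 [:: c1; c2; c3] i).
by rewrite !big_ord_recl big_ord0 addr0 addrA.
Qed.

Lemma kz_d1 (f1 f2 f3 : R) (v : 'rV_3) :
  (v *m dif1 (koszul3 f1 f2 f3)) 0 0 = v 0 0 * f1 + v 0 1 * f2 + v 0 2 * f3.
Proof.
rewrite /= !mxE !big_ord_recl big_ord0 !mxE /= addr0 addrA.
by rewrite l31 l32.
Qed.

End Final.

Ltac nr := rewrite ?(mulr0, mul0r, addr0, add0r, mulrN, mulNr, opprK, oppr0); ring.

Section Kz.
Variable R : comNzRingType.
Variables f1 f2 f3 : R.
Let K := koszul3 f1 f2 f3.

Lemma kz_comp : dif3 K *m dif2 K = 0 /\ dif2 K *m dif1 K = 0.
Proof.
split; apply/matrixP => i j; rewrite !mxE !big_ord_recl big_ord0 !mxE /=.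
  case: j => [[|[|[|?]]] Hj] //=; try nr.
case: i => [[|[|[|?]]] Hi] //=; try nr.
Qed.

Lemma kz_d2 (v : 'rV_3) : v *m dif2 K = 0 <->
  [/\ - v 0 1 * f3 - v 0 2 * f2 = 0, - v 0 0 * f3 + v 0 2 * f1 = 0
    & v 0 0 * f2 + v 0 1 * f1 = 0].
Proof.
split.
  move=> H; have := fun j => congr1 (fun M : 'rV_3 => M 0 j) H.
  move=> /= H'; move: (H' 0) (H' 1) (H' 2); rewrite !mxE !big_ord_recl !big_ord0 !mxE /= !l31 !l32 ?l30.
  move=> a b c; split; [rewrite -a|rewrite -b|rewrite -c]; nr.
move=> [a b c]; apply/matrixP => i j; rewrite !mxE !big_ord_recl !big_ord0 !mxE /= !l31 !l32 ?l30.
rewrite (ord1 i).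
case: j => [[|[|[|?]]] ?] //=.
- by rewrite -[RHS]a; nr.
- by rewrite -[RHS]b; nr.
- by rewrite -[RHS]c; nr.
Qed.

Lemma kz_d3_0 (u : 'rV_1) : (u *m dif3 K) 0 0 = u 0 0 * f1.
Proof. by rewrite !mxE big_ord_recl big_ord0 addr0 !mxE /= l10. Qed.

Lemma kz_d3_eq (v : 'rV_3) (c : R) : v 0 0 = c * f1 -> v 0 1 = - (c * f2) -> v 0 2 = c * f3 ->
  v = (\row_(j < 1) c) *m dif3 K.
Proof.
move=> a b e; apply/matrixP => i j; rewrite (ord1 i) !mxE big_ord_recl big_ord0 addr0 !mxE /=.
case: j => [[|[|[|?]]] Hj] //=.
- by rewrite (_ : Ordinal Hj = 0%R) ?a //; apply: val_inj.
- by rewrite (_ : Ordinal Hj = 1%R) ?b ?mulrN //; apply: val_inj.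
- by rewrite (_ : Ordinal Hj = 2%R) ?e //; apply: val_inj.
Qed.

Lemma kz_d2_eq (v : 'rV_3) u0 u1 u2 :
  v 0 0 = - u1 * f3 - u2 * f2 -> v 0 1 = - u0 * f3 + u2 * f1 -> v 0 2 = u0 * f2 + u1 * f1 ->
  v = (\row_(j < 3) [:: u0; u1; u2]`_j) *m dif2 K.
Proof.
move=> a b e; apply/matrixP => i j; rewrite (ord1 i) !mxE !big_ord_recl !big_ord0 !mxE /= ?l31 ?l32 ?l30.
case: j => [[|[|[|?]]] Hj] //=.
- by rewrite (_ : Ordinal Hj = 0%R) ?a; [nr | apply: val_inj].
- by rewrite (_ : Ordinal Hj = 1%R) ?b; [nr | apply: val_inj].
- by rewrite (_ : Ordinal Hj = 2%R) ?e; [nr | apply: val_inj].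
Qed.

Lemma kz_d1_0 (v : 'rV_3) : v *m dif1 K = 0 <-> v 0 0 * f1 + v 0 1 * f2 + v 0 2 * f3 = 0.
Proof.
rewrite -kz_d1; split => [->|H]; first by rewrite mxE.
by apply/matrixP => i j; rewrite (ord1 i) (ord1 j) H mxE.
Qed.

End Kz.

Lemma mk4_neq0 a b c e : (0 < a + b + c + e)%N -> mk4 a b c e != 0%MM.
Proof.
move=> H; apply/eqP => E.
have E0 : (0%MM : 'X_{1..4}) = mk4 0 0 0 0 by apply: mk4_ext; rewrite !mnm0E !mk4E.
by move: E; rewrite E0 => /mk4_inj [] *; lia.
Qed.

Lemma Xdiff_c0 (k : fieldType) (A B : 'X_{1..4}) : A != 0%MM -> B != 0%MM ->
  ('X_[A] - 'X_[B] : {mpoly k[4]})@_0 = 0.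
Proof. by move=> hA hB; rewrite mcoeffB !mcoeffX (negbTE hA) (negbTE hB) subrr. Qed.

Lemma mc0M (k : fieldType) (p q : {mpoly k[4]}) : (p * q)@_0 = p@_0 * q@_0.
Proof. by have [H _] := mcoeff0_is_multiplicative 4 k; apply: H. Qed.

Section Main.
Variables (k : fieldType) (m d : nat).
Hypothesis m_gt0 : (0 < m)%N.
Hypothesis d_gt0 : (0 < d)%N.

Lemma g1_c0 : (g1 k)@_0 = 0.
Proof. by apply: Xdiff_c0; apply: mk4_neq0. Qed.
Lemma g2_c0 : (g2 k)@_0 = 0.
Proof. by apply: Xdiff_c0; apply: mk4_neq0. Qed.
Lemma g3_c0 : (g3 k m d)@_0 = 0.
Proof. by apply: Xdiff_c0; apply: mk4_neq0; lia. Qed.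

Lemma g1_neq0 : g1 k != 0.
Proof. by apply: Xdiff_neq0; apply/eqP => /mk4_inj []. Qed.

End Main.

Theorem corollary5p2 (k : fieldType) (a d m : nat) :
  (0 < d)%N -> (7 <= a)%N -> coprime a d -> a = (6 * m)%N ->
  let f1 : {mpoly k[4]} := x3 ^+ 2 - x1 ^+ 2 * x4 in
  let f2 : {mpoly k[4]} := x2 ^+ 3 - x1 ^+ 3 * x3 in
  let f3 : {mpoly k[4]} := x1 ^+ (4 * m + d) - x4 ^+ m in
  let p4 := curve_ideal (k := k) (w4 a d) in
  [/\ is_minimal_free_resolution p4 (koszul3 f1 f2 f3),
      [/\ betti (koszul3 f1 f2 f3) 0 = 1%N, betti (koszul3 f1 f2 f3) 1 = 3%N,
          betti (koszul3 f1 f2 f3) 2 = 3%N & betti (koszul3 f1 f2 f3) 3 = 1%N]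
    & complete_intersection p4].
Proof.
move=> hd ha co ham f1 f2 f3 p4.
have m_gt0 : (0 < m)%N by lia.
subst a.
have -> : f1 = g1 k by rewrite /f1 f1E.
have -> : f2 = g2 k by rewrite /f2 f2E.
have -> : f3 = g3 k m d by rewrite /f3 f3E.
have kerE : forall p, p4 p <-> exists c1 c2 c3, p = c1 * g1 k + c2 * g2 k + c3 * g3 k m d.
  by move=> p; rewrite /p4 /curve_ideal; apply: (kernel m_gt0 co).
have nz1 := g1_neq0 k.
have R2 := @reg2 k m m_gt0.
have R3 := @reg3 k m d m_gt0.
set K := koszul3 (g1 k) (g2 k) (g3 k m d).
have res : is_free_resolution p4 K.
  split.
  - exact: kz_comp.
  - move=> v H; apply/matrixP => i j; rewrite (ord1 i) (ord1 j) mxE.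
    have := congr1 (fun M : 'M_(1,3) => M 0 0) H; rewrite /= kz_d3_0 mxE => /eqP.
    by rewrite mulf_eq0 (negbTE nz1) orbF => /eqP.
  - move=> v /kz_d2 [a b c].
    have [u hu] : exists u, v 0 0 = u * g1 k.
      apply: (R2 (v 0 0) (- v 0 1)); apply/eqP; rewrite mulNr -addr_eq0; exact/eqP.
    have hv1 : v 0 1 = - (u * g2 k).
      apply: (mulIf nz1); apply/eqP; rewrite -subr_eq0 -[X in _ == X]c hu; apply/eqP; ring.
    have hv2 : v 0 2 = u * g3 k m d.
      apply: (mulIf nz1); apply/eqP; rewrite -subr_eq0 -[X in _ == X]b hu; apply/eqP; ring.
    by exists (\row_(j < 1) u); apply: kz_d3_eq.
  - move=> v /kz_d1_0 H.
    have [A [B hv2]] : exists A B, v 0 2 = A * g1 k + B * g2 k.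
      apply: (R3 (v 0 2) (- v 0 0) (- v 0 1)); apply/eqP; rewrite -subr_eq0 -[X in _ == X]H; apply/eqP; ring.
    have [C hC] : exists C, v 0 1 + B * g3 k m d = C * g1 k.
      apply: (R2 _ (- (v 0 0 + A * g3 k m d))); apply/eqP; rewrite -subr_eq0 -[X in _ == X]H hv2; apply/eqP; ring.
    have hv1 : v 0 1 = C * g1 k - B * g3 k m d by rewrite -hC; ring.
    have hv0 : v 0 0 = - A * g3 k m d - C * g2 k.
      apply: (mulIf nz1); apply/eqP; rewrite -subr_eq0 -[X in _ == X]H hv2 hv1; apply/eqP; ring.
    exists (\row_(j < 3) [:: B; A; C]`_j); apply: kz_d2_eq; rewrite ?hv0 ?hv1 ?hv2 /=; ring.
  - move=> p; rewrite kerE; split.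
      move=> [c1 [c2 [c3 ->]]]; exists (\row_(j < 3) [:: c1; c2; c3]`_j).
      by rewrite kz_d1 !mxE.
    by move=> [v ->]; rewrite kz_d1; exists (v 0 0), (v 0 1), (v 0 2).
split.
- split => //.
  + move=> i j; rewrite /in_max_ideal mxE.
    case: i => [[|[|[|?]]] Hi] //=; rewrite ?g1_c0 ?g2_c0 ?(g3_c0 k m_gt0 hd) //.
  + move=> i j; rewrite /in_max_ideal mxE.
    by case: i => [[|[|[|?]]] Hi]; case: j => [[|[|[|?]]] Hj] //=;
      rewrite ?mcoeffN ?mcoeff0 ?g1_c0 ?g2_c0 ?(g3_c0 k m_gt0 hd) ?oppr0.
  + move=> i j; rewrite /in_max_ideal mxE.
    by case: j => [[|[|[|?]]] Hj] //=; rewrite ?mcoeffN ?g1_c0 ?g2_c0 ?(g3_c0 k m_gt0 hd) ?oppr0.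
- by [].
- exists [:: g1 k; g2 k; g3 k m d]; split; last first.
    by move=> p; rewrite kerE; split => /gen3.
  split.
    move=> [|[|[|i]]] // _ g /=.
    + move/gen0 => /eqP; rewrite mulf_eq0 (negbTE nz1) orbF => /eqP ->.
      by apply/gen0.
    + by move/gen1 => [c H]; apply/gen1; exact: R2 H.
    + by move/gen2 => [c1 [c2 H]]; apply/gen2; exact: R3 H.
  move/gen3 => [c1 [c2 [c3 H]]]; have := congr1 (mcoeff 0%MM) H.
  rewrite mcoeff1 eqxx !mcoeffD !mc0M g1_c0 g2_c0 (g3_c0 k m_gt0 hd) !mulr0 !addr0 => /eqP.
  by rewrite oner_eq0.
Qed.
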